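(* Let $P$ be a $\sigma$-liminf-centered poset. Then $P$ does not add a dominating real. In fact, $P$ preserves unboundedness of all subsets of $\omega^\omega$: if $F\subset\omega^\omega$ is unbounded in the modulo-finite domination order, then $P$ forces that $F$ remains unbounded.
   Context: For a poset $P$, a set $A\subset P$ is liminf centered if for every sequence $\langle p_i\colon i\in\omega\rangle$ of elements of $A$ there is $q\in P$ such that for every $r\leq q$ the set $\{i\in\omega\colon p_i$ is compatible with $r\}$ is infinite. $P$ is $\sigma$-liminf-centered if it is a countable union of liminf centered sets. A dominating real is an element of $\omega^\omega$ in the extension dominating modulo finite every ground model element of $\omega^\omega$. *)

(* Defs.v *)
(* Forcing over a poset is rendered internally via the
   standard combinatorial forcing relation for the (arithmetic in names)
   statements involved. *)

(* A poset (forcing notion): [le p q] means "p is stronger than q" (p <= q). *)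
Record poset := Poset {
  carrier :> Type;
  le : carrier -> carrier -> Prop;
  le_refl : forall p, le p p;
  le_trans : forall p q r, le p q -> le q r -> le p r;
  le_antisym : forall p q, le p q -> le q p -> p = q
}.

Arguments le {_} _ _.

Definition compatible {P : poset} (p q : P) : Prop :=
  exists s : P, le s p /\ le s q.

Definition liminf_centered {P : poset} (A : P -> Prop) : Prop :=
  forall p : nat -> P, (forall i, A (p i)) ->
    exists q : P, forall r : P, le r q ->
      forall N : nat, exists i, N <= i /\ compatible (p i) r.

Definition sigma_liminf_centered (P : poset) : Prop :=
  exists A : nat -> P -> Prop,
    (forall n, liminf_centered (A n)) /\ (forall p : P, exists n, A n p).

Definition le_star (g f : nat -> nat) : Prop :=
  exists N, forall m, N <= m -> g m <= f m.

Definition unbounded (F : (nat -> nat) -> Prop) : Prop :=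
  forall f : nat -> nat, exists g, F g /\ ~ le_star g f.

(* A P-name for an element of ω^ω, given by the relation
   [nm n k p] := "p forces  fdot(n) = k". *)
Record real_name (P : poset) := RealName {
  nm :> nat -> nat -> P -> Prop;
  nm_down : forall n k p q, nm n k p -> le q p -> nm n k q;
  nm_fun : forall n k k' p, nm n k p -> nm n k' p -> k = k';
  nm_dense : forall n (p : P), exists q, le q p /\ exists k, nm n k q
}.

Definition dense_below {P : poset} (q : P) (D : P -> Prop) : Prop :=
  forall r, le r q -> exists r', le r' r /\ D r'.

(* q forces "~ (g <=* fdot)", i.e. q forces "for all N there is m >= N
   with fdot(m) < g(m)". *)
Definition forces_not_le_star {P : poset} (q : P) (g : nat -> nat)
    (f : real_name P) : Prop :=
  forall N : nat, dense_below q (fun r =>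
    exists m k, N <= m /\ f m k r /\ k < g m).

Definition forces_unbounded (P : poset) (F : (nat -> nat) -> Prop) : Prop :=
  forall (f : real_name P) (p : P),
    exists q, le q p /\ exists g, F g /\ forces_not_le_star q g f.

Definition adds_no_dominating_real (P : poset) : Prop :=
  forall (f : real_name P) (p : P),
    exists q, le q p /\ exists g : nat -> nat, forces_not_le_star q g f.

(* Main.v *)
Require Import Defs.
From Stdlib Require Import Classical ClassicalEpsilon Lia Arith PeanoNat.

Section S.
Variable P : poset.
Variable f : real_name P.

Definition forced_gt (a : P) (m k : nat) : Prop :=
  dense_below a (fun s => exists j, f m j s /\ k < j).

Lemma good_exists (A : P -> Prop) (HA : liminf_centered A) (m : nat) :
  exists k, forall a, A a -> ~ forced_gt a m k.
Proof.
  apply NNPP; intro Hn.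
  assert (H : forall k, exists a, A a /\ forced_gt a m k).
  { intro k. apply NNPP; intro H'. apply Hn. exists k. intros a Ha Hf.
    apply H'. exists a. tauto. }
  set (p := fun k => proj1_sig (constructive_indefinite_description _ (H k))).
  assert (Hp : forall k, A (p k) /\ forced_gt (p k) m k).
  { intro k. unfold p. destruct (constructive_indefinite_description _ (H k)); auto. }
  destruct (HA p (fun k => proj1 (Hp k))) as [q Hq].
  destruct (nm_dense P f m q) as [r [Hrq [j Hj]]].
  destruct (Hq r Hrq j) as [i [Hij [s [Hs1 Hs2]]]].
  destruct (proj2 (Hp i) s Hs1) as [s' [Hs's [j' [Hj' Hlt]]]].
  assert (f m j s') by (apply (nm_down P f m j r); [exact Hj| eapply le_trans; eauto]).
  assert (j = j') by (eapply nm_fun; eauto). lia.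
Qed.

Lemma good_mono a m k k' : k <= k' -> forced_gt a m k' -> forced_gt a m k.
Proof.
  intros Hk H r Hr. destruct (H r Hr) as [r' [H1 [j [H2 H3]]]].
  exists r'. split; auto. exists j. split; auto. lia.
Qed.

Lemma good_all (A : nat -> P -> Prop) (HA : forall n, liminf_centered (A n)) :
  forall m M, exists k, forall n, n <= M -> forall a, A n a -> ~ forced_gt a m k.
Proof.
  intros m M. induction M as [|M IH].
  - destruct (good_exists (A 0) (HA 0) m) as [k Hk]. exists k.
    intros n Hn. assert (n = 0) by lia. subst. auto.
  - destruct IH as [k1 H1]. destruct (good_exists (A (S M)) (HA (S M)) m) as [k2 H2].
    exists (max k1 k2). intros n Hn a Ha Hf.
    destruct (Nat.eq_dec n (S M)) as [->|Hne].
    + apply (H2 a Ha). eapply good_mono; [|exact Hf]. lia.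
    + apply (H1 n ltac:(lia) a Ha). eapply good_mono; [|exact Hf]. lia.
Qed.

Lemma main (A : nat -> P -> Prop) (HA : forall n, liminf_centered (A n))
  (Hcov : forall p : P, exists n, A n p) (F : (nat -> nat) -> Prop) :
  unbounded F -> exists g, F g /\ forall p : P, forces_not_le_star p g f.
Proof.
  intro HF.
  pose (h := fun m => proj1_sig (constructive_indefinite_description _ (good_all A HA m m))).
  assert (Hh : forall m n, n <= m -> forall a, A n a -> ~ forced_gt a m (h m)).
  { intro m. unfold h. destruct (constructive_indefinite_description _ _); auto. }
  destruct (HF h) as [g [Hg Hgh]]. exists g. split; auto.
  intros p N r Hr.
  destruct (Hcov r) as [n Hn].
  assert (Hm : exists m, max N n <= m /\ h m < g m).
  { apply NNPP; intro H. apply Hgh. exists (max N n). intros m Hm.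
    destruct (le_lt_dec (g m) (h m)); auto. exfalso; apply H; eauto. }
  destruct Hm as [m [Hm1 Hm2]].
  pose proof (Hh m n ltac:(lia) r Hn) as Hng.
  assert (Hex : exists r', le r' r /\ forall r'', le r'' r' -> ~ exists j, f m j r'' /\ h m < j).
  { apply NNPP; intro H. apply Hng. intros r1 Hr1. apply NNPP; intro H2. apply H.
    exists r1. split; auto. intros r'' H3 H4. apply H2. exists r''. auto. }
  destruct Hex as [r' [Hr' Hr'']].
  destruct (nm_dense P f m r') as [s [Hs [j Hj]]].
  exists s. split; [eapply le_trans; eauto|].
  exists m, j. split; [lia|]. split; auto.
  destruct (le_lt_dec j (h m)); [lia|]. exfalso. apply (Hr'' s Hs). eauto.
Qed.
End S.

Theorem theorem3p8 (P : poset) :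
  sigma_liminf_centered P ->
  adds_no_dominating_real P /\
  (forall F : (nat -> nat) -> Prop, unbounded F -> forces_unbounded P F).
Proof.
  intros [A [HA Hcov]]. split.
  - intros f p. destruct (main P f A HA Hcov (fun _ => True)) as [g [_ Hg]].
    + intro h. exists (fun m => S (h m)). split; auto. intros [N HN].
      specialize (HN N (le_n N)). lia.
    + exists p. split; [apply le_refl|]. exists g. auto.
  - intros F HF f p. destruct (main P f A HA Hcov F HF) as [g [Hg1 Hg2]].
    exists p. split; [apply le_refl|]. exists g. auto.
Qed.
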